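(* Let $\phi\ge1$. Consider a knapsack instance with arbitrary profits $p_1,\ldots,p_n\in\mathbb{R}_{\ge0}$ in which each weight $w_i$ is chosen uniformly at random from an arbitrary interval $A_i\subseteq[0,1]$ of length $1/\phi$, independently of the other weights, and let $\mathcal{P}$ be the set of Pareto-optimal solutions. Then for every $t\ge0$ and every $\varepsilon>0$, $\Pr[\exists x\in\mathcal{P}: w^{\mathsf T}x\in(t,t+\varepsilon]]\le n\phi\varepsilon$.
   Context: Solutions are vectors $x\in\{0,1\}^n$. A solution $y$ dominates $x$ if $p^{\mathsf T}y\ge p^{\mathsf T}x$ and $w^{\mathsf T}y\le w^{\mathsf T}x$ with at least one inequality strict; $x$ is Pareto-optimal if no solution dominates it. *)

(* Defs.v *)
From HB Require Import structures.
From mathcomp Require Import all_boot all_order all_algebra.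
From mathcomp Require Import all_classical all_reals all_analysis.
Set Implicit Arguments. Unset Strict Implicit. Unset Printing Implicit Defensive.
Import Order.TTheory GRing.Theory Num.Theory.
Local Open Scope classical_set_scope.
Local Open Scope ring_scope.

Definition linval (R : realType) (n : nat) (c : 'I_n -> R) (x : 'I_n -> bool) : R :=
  \sum_(i < n) c i * (x i)%:R.

Definition dominates (R : realType) (n : nat) (p w : 'I_n -> R) (y x : 'I_n -> bool) : Prop :=
  linval p x <= linval p y /\ linval w y <= linval w x /\
  (linval p x < linval p y \/ linval w y < linval w x).

Definition pareto_optimal (R : realType) (n : nat) (p w : 'I_n -> R) (x : 'I_n -> bool) : Prop :=
  forall y : 'I_n -> bool, ~ dominates p w y x.

(* Mutual independence of a finite family of real random variables:
   product rule for all families of measurable sets (taking B i = setT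
   recovers every subfamily). *)
Definition mutually_independent (R : realType) (d : measure_display)
  (T : measurableType d) (P : probability T R) (n : nat) (X : 'I_n -> {RV P >-> R}) : Prop :=
  forall B : 'I_n -> set R, (forall i, measurable (B i)) ->
    P (\bigcap_(i in [set: 'I_n]) (X i @^-1` B i)) = (\prod_(i < n) P (X i @^-1` B i))%E.

Definition uniform_on (R : realType) (d : measure_display) (T : measurableType d)
  (P : probability T R) (X : {RV P >-> R}) (a b : R) : Prop :=
  forall B : set R, measurable B ->
    P (X @^-1` B) = (\int[lebesgue_measure]_(x in B) (uniform_pdf a b x)%:E)%E.

(* Main.v *)
Require Import Defs.
From HB Require Import structures.
From mathcomp Require Import all_boot all_order all_algebra.
From mathcomp Require Import all_classical all_reals all_analysis.
From mathcomp Require Import ring lra measurable_realfun.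
Import Order.TTheory GRing.Theory Num.Theory.
Local Open Scope classical_set_scope.
Local Open Scope ring_scope.
Set Implicit Arguments. Unset Strict Implicit.

Section S.
Variables (R : realType) (d : measure_display) (T : measurableType d)
  (P : probability T R) (n : nat) (w : 'I_n -> {RV P >-> R}).

Lemma mpre (j : 'I_n) B : measurable B -> measurable (w j @^-1` B).
Proof. by move=> mB; rewrite -(setTI (_ @^-1` _)); exact: measurable_funPT. Qed.

Definition G0 (i : 'I_n) : set (set T) :=
  [set A | exists B : 'I_n -> set R, (forall j, measurable (B j)) /\ B i = setT /\
     A = \bigcap_(j in [set: 'I_n]) (w j @^-1` B j)].

Lemma G0_meas i A : G0 i A -> measurable A.
Proof.
move=> [B [mB [_ ->]]]; apply: fin_bigcap_measurable; first exact: finite_finset.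
by move=> j _; exact: mpre.
Qed.

Lemma G0_setI i : setI_closed (G0 i).
Proof.
move=> A1 A2 [B1 [m1 [i1 ->]]] [B2 [m2 [i2 ->]]].
exists (fun j => B1 j `&` B2 j); split; first by move=> j; exact: measurableI.
split; first by rewrite i1 i2 setIT.
apply/seteqP; split => x /=.
- by move=> [H1 H2] j _; split; [exact: H1|exact: H2].
- by move=> H; split => j _; have [] := H j I.
Qed.

Lemma sG0_meas i A : <<s G0 i >> A -> measurable A.
Proof.
move=> sA; apply: (smallest_sub (@sigma_algebra_measurable _ T) _ sA).
by move=> X; exact: G0_meas.
Qed.
End S.


Section S.
Variables (R : realType) (d : measure_display) (T : measurableType d)
  (P : probability T R) (n : nat) (w : 'I_n -> {RV P >-> R}).

Lemma PE (X : set T) : measurable X -> P X = (fine (P X))%:E.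
Proof. by move=> mX; rewrite fineK// fin_num_measure. Qed.

Lemma indep_dynkin (C : set T) : measurable C ->
  dynkin [set X | measurable X /\ P (X `&` C) = (P X * P C)%E].
Proof.
move=> mC; split.
- by split => //; rewrite setTI probability_setT mul1e.
- move=> A [mA HA]; split; first exact: measurableC.
  have -> : ~` A `&` C = C `\` (C `&` A).
    by apply/seteqP; split => x /=; [move=> [nA Cx]; split => // -[]|move=> [Cx nCA]; split => // Ax; apply: nCA].
  have PD X Y : measurable X -> measurable Y -> P (X `\` Y) = (P X - P (X `&` Y))%E.
    move=> mX mY; apply: measureD => //.
    by rewrite (le_lt_trans (probability_le1 _ mX)) ?ltry.
  rewrite PD //; last exact: measurableI.
  rewrite setIA setIid setIC HA probability_setC //.
  rewrite (PE mA) (PE mC) -EFinM -EFinB -EFinB -EFinM; congr (_%:E); ring.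
- move=> F tF HF.
  have mF k : measurable (F k) by case: (HF k).
  split; first by apply: bigcupT_measurable.
  rewrite setI_bigcupl.
  have tFC : trivIset setT (fun k => F k `&` C).
    apply/trivIsetP => i j _ _ ij.
    move/trivIsetP : tF => /(_ i j I I ij) H.
    by rewrite setIACA setIid H set0I.
  have PB (G : (set T)^nat) : (forall k, measurable (G k)) -> trivIset setT G ->
      P (\bigcup_(k in setT) G k) = (\sum_(k <oo | k \in setT) P (G k))%E.
    by move=> mG tG; apply: measure_bigcup.
  rewrite !PB //; last by move=> k; exact: measurableI.
  rewrite muleC (PE mC) -nneseriesZl //.
  apply: eq_eseriesr => k _.
  by case: (HF k) => _ ->; rewrite -(PE mC) muleC.
Qed.
End S.

Section S2.
Variables (R : realType) (d : measure_display) (T : measurableType d)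
  (P : probability T R) (n : nat) (w : 'I_n -> {RV P >-> R}).

Lemma indep_ext (hind : mutually_independent w) (i : 'I_n) (B : set R) :
  measurable B -> forall A, <<s G0 w i >> A ->
  P (A `&` w i @^-1` B) = (P A * P (w i @^-1` B))%E.
Proof.
move=> mB A sA.
have mC := mpre w i mB.
have H := @lambda_system_subset T (G0 w i) (@G0_setI _ _ _ _ _ w i) setT _
   ((dynkin_lambda_system _).1 (indep_dynkin P mC)).
have : [set X | measurable X /\ P (X `&` (w i @^-1` B)) = (P X * P (w i @^-1` B))%E] A.
  apply: H => //.
  move=> X GX; split; first exact: G0_meas GX.
  case: GX => Bj [mBj [Bji ->]].
  pose B' := fun j => if j == i then B else Bj j.
  have mB' j : measurable (B' j) by rewrite /B'; case: ifP.
  have -> : \bigcap_(j in [set: 'I_n]) (w j @^-1` Bj j) `&` w i @^-1` B =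
            \bigcap_(j in [set: 'I_n]) (w j @^-1` B' j).
    apply/seteqP; split => x /=.
    - move=> [H1 H2] j _; rewrite /B'; case: eqP => [->//|_]; exact: H1.
    - move=> H1; split; last by have := H1 i I; rewrite /B' eqxx.
      move=> j _; have := H1 j I; rewrite /B'; case: eqP => [->|//].
      by rewrite Bji.
  rewrite (hind B' mB') (hind Bj mBj) [in LHS](bigD1 i) //= [in RHS](bigD1 i) //=.
  rewrite /B' eqxx Bji preimage_setT probability_setT mul1e muleC.
  congr (_ * _)%E; apply: eq_bigr => j /negbTE ->; done.
by case.
Qed.
End S2.


Section S3.
Variables (R : realType) (d : measure_display) (T : measurableType d)
  (P : probability T R) (X : {RV P >-> R}) (a b : R).
Hypothesis ab : a < b.
Hypothesis hu : uniform_on X a b.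

Lemma unif_bad : P (X @^-1` (~` `[a, b])) = 0%E.
Proof.
rewrite hu; last by apply: measurableC.
rewrite integral_uniform_pdf setICl; exact: integral_set0.
Qed.

Lemma unif_ub (c L : R) : 0 <= L ->
  (P (X @^-1` `]c, (c + L)%R]) <= ((b - a)^-1 * L)%:E)%E.
Proof.
move=> L0; rewrite hu //.
have h0 : 0 <= (b - a)^-1 by rewrite invr_ge0 subr_ge0 ltW.
apply: (@le_trans _ _ (\int[lebesgue_measure]_(x in `]c, (c + L)%R]) (cst ((b - a)^-1)%:E) x)%E).
  apply: ge0_le_integral => //.
  - by move=> x _; rewrite lee_fin uniform_pdf_ge0.
  - apply/measurable_EFinP; apply: measurable_funTS; exact: measurable_uniform_pdf.
  - by move=> x _; rewrite lee_fin /uniform_pdf; case: ifP.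
have HL : lebesgue_measure (`]c, (c + L)%R]%classic : set R) = L%:E.
  rewrite lebesgue_measure_itv /= lte_fin.
  case: ltgtP => [_|//|]; first by rewrite -EFinB addrAC subrr add0r.
  by move=> e; have -> : L = 0 by lra.
  by move=> e; have -> : L = 0 by lra.
rewrite integral_cst // [Y in (_ * Y <= _)%E](_ : _ = L%:E); last exact: HL.
by rewrite -EFinM.
Qed.
End S3.


Section S4.
Variables (R : realType) (d : measure_display) (T : measurableType d)
  (P : probability T R) (n : nat) (w : 'I_n -> {RV P >-> R}).

Lemma w_mTp (i j : 'I_n) : j != i ->
  measurable_fun (setT : set (g_sigma_algebraType (G0 w i))) (fun x => w j x).
Proof.
move=> ji _ Y mY; rewrite setTI; apply: sub_sigma_algebra.
exists (fun k => if k == j then Y else setT); split.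
  by move=> k; case: ifP.
split; first by rewrite eq_sym (negbTE ji).
apply/seteqP; split => x /=.
- by move=> Yx k _; case: eqP => [->//|].
- by move=> H; have := H j I; rewrite eqxx.
Qed.

Lemma Tp_T (i : 'I_n) (f : T -> R) :
  measurable_fun (setT : set (g_sigma_algebraType (G0 w i))) f ->
  measurable_fun (setT : set T) f.
Proof.
move=> mf _ Y mY; have := mf measurableT Y mY; rewrite !setTI => h.
exact: sG0_meas h.
Qed.
End S4.


Section S5.
Variables (R : realType) (d : measure_display) (T : measurableType d)
  (P : probability T R) (n : nat) (w : 'I_n -> {RV P >-> R}).
Hypothesis hind : mutually_independent w.

Lemma CL (i : 'I_n) (a b : R) (ab : a < b) (hu : uniform_on (w i) a b)
  (l : T -> R) (ml : measurable_fun (setT : set (g_sigma_algebraType (G0 w i))) l)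
  (t e del : R) : 0 < e -> 0 < del ->
  (P [set x | (t < w i x + l x <= t + e)%R] <= ((b - a)^-1 * (e + del))%:E)%E.
Proof.
move=> e0 del0.
set L := e + (b - a).
have L0 : 0 < L by rewrite /L; lra.
set N := Num.bound (L / del).
have LN : L / del < N%:R by apply: archi_boundP; rewrite divr_ge0 // ltW.
have N0 : (0 < N)%N.
  rewrite -(ltr_nat R); apply: le_lt_trans LN; rewrite divr_ge0 // ltW //.
have N0' : (0 : R) < N%:R by rewrite ltr0n.
set h := L / N%:R.
have h0 : 0 < h by rewrite divr_gt0.
have hdel : h <= del.
  rewrite /h ler_pdivrMr // mulrC -ler_pdivrMr //; exact: ltW.
have hN : N%:R * h = L by rewrite /h mulrC divfK // gt_eqF.
pose S (k : nat) := l @^-1` `]t - b + k%:R * h, (t - b + k%:R * h + h)%R].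
pose J (k : nat) := w i @^-1` `]b - k.+1%:R * h, (b - k.+1%:R * h + (e + h))%R].
pose F (k : nat) := if k is k'.+1 then S k' `&` J k' else w i @^-1` (~` `[a, b]).
have mlT : measurable_fun setT l := Tp_T ml.
have mwi : measurable_fun setT (w i) := measurable_funPT (w i).
have sS k : <<s G0 w i >> (S k).
  have := ml measurableT _ (measurable_itv `]t - b + k%:R * h, (t - b + k%:R * h + h)%R]).
  by rewrite setTI.
have mS k : measurable (S k) by exact: sG0_meas (sS k).
have mJ k : measurable (J k) by exact: mpre.
have mF k : measurable (F k).
  by case: k => [|k] /=; [apply: mpre; apply: measurableC|exact: measurableI].
set E := [set x | _].
have mE : measurable E.
  have -> : E = setT `&` (fun x => w i x + l x) @^-1` `]t, (t + e)%R].
    by rewrite /E; apply/seteqP; split => x /=; rewrite in_itv /=; [move=> ->|case].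
  by apply: measurable_funD.
have EF : E `<=` \big[setU/set0]_(k < N.+1) F k.
  move=> x Ex; rewrite -bigcup_mkord.
  case: (boolP (a <= w i x <= b)) => [/andP[wa wb]|nab]; last first.
    exists 0%N => //=; apply/negP; rewrite ?inE /= ?in_itv /=; exact: nab.
  move: Ex; rewrite /E /= => /andP[E1 E2].
  set y := l x - (t - b).
  have ex : exists k, (y <= k.+1%:R * h).
    by exists N.-1; rewrite prednK // hN /y /L; lra.
  case: (ex_minnP ex) => k Hk Hmin.
  have kN : (k < N)%N.
    have := Hmin N.-1; rewrite prednK // hN /y /L => H.
    by apply: leq_ltn_trans (H _) _; [lra|rewrite ltn_predL].
  have ylow : k%:R * h < y.
    case: k Hk Hmin {kN} => [|k'] Hk Hmin; first by rewrite mul0r /y; lra.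
    rewrite ltNge; apply/negP => H; have := Hmin k' H; by rewrite ltnn.
  exists k.+1 => //=.
  rewrite -natr1 mulrDl mul1r in Hk.
  move: Hk ylow; rewrite /y; set u := k%:R * h => Hk ylow.
  split; rewrite /S /J /= in_itv /= -?natr1 ?mulrDl ?mul1r -/u; apply/andP; split; lra.
have PS : (P E <= \sum_(k < N.+1) P (F k))%E.
  by apply: content_subadditive => // k _.
apply: le_trans PS _.
rewrite big_ord_recl /= unif_bad // add0e.
have ind k : P (S k `&` J k) = (P (S k) * P (J k))%E.
  exact: (indep_ext hind (measurable_itv _) (sS k)).
apply: (@le_trans _ _ (\sum_(k < N) (P (S k) * ((b - a)^-1 * (e + h))%:E))%E).
  apply: lee_sum => k _; rewrite ind; apply: lee_wpmul2l => //.
  by apply: unif_ub => //; lra.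
have h1 : (0 <= (b - a)^-1 * (e + h)) by rewrite mulr_ge0 // ?invr_ge0; lra.
rewrite -ge0_sume_distrl //.
have tS : trivIset setT (fun k : 'I_N => S k).
  apply/trivIsetP => k k' _ _ kk'.
  rewrite -subset0 => x [/= H1 H2].
  move: H1 H2; rewrite /S /= !in_itv /= => /andP[a1 a2] /andP[b1 b2].
  case: (ltngtP k k') => [lt|lt|eq]; last by move: kk'; rewrite (val_inj eq) eqxx.
  - have : (k%:R + 1) * h <= k'%:R * h.
      by rewrite ler_wpM2r ?(ltW h0) // natr1 ler_nat.
    rewrite mulrDl mul1r => H; lra.
  - have : (k'%:R + 1) * h <= k%:R * h.
      by rewrite ler_wpM2r ?(ltW h0) // natr1 ler_nat.
    rewrite mulrDl mul1r => H; lra.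
have sum1 : (\sum_(k < N) P (S k) <= 1)%E.
  have -> : (\sum_(k < N) P (S k) = P (\big[setU/set0]_(k < N) S k))%E.
    by symmetry; apply: (measure_bigsetU_ord P xpredT (F:=fun k : 'I_N => S k)) => // k; exact: mS.
  apply: probability_le1; apply: bigsetU_measurable => k _; exact: mS.
apply: le_trans (lee_wpmul2r _ sum1) _; first by rewrite lee_fin.
rewrite mul1e lee_fin ler_wpM2l // ?invr_ge0; lra.
Qed.
End S5.


Section Det.
Variables (R : realType) (n : nat) (p : 'I_n -> R) (t : R).
Notation BV := {ffun 'I_n -> bool}.

Definition linoff (i : 'I_n) (v : 'I_n -> R) (z : 'I_n -> bool) : R :=
  \sum_(j < n) (if j == i then 0 else v j) * (z j)%:R.

Definition Pst (i : 'I_n) (v : 'I_n -> R) : R :=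
  \big[Order.max/0]_(z : BV | z i == false)
     (if linoff i v z <= t then linval p z else 0).

Definition BIG (i : 'I_n) (v : 'I_n -> R) : R :=
  1 + \sum_(z : BV) Order.max (linoff i v z) 0.

Definition Cmin (i : 'I_n) (v : 'I_n -> R) : R :=
  \big[Order.min/BIG i v]_(z : BV)
     (if z i && (Pst i v < linval p z) then linoff i v z else BIG i v).

Lemma LO0 i v (z : 'I_n -> bool) : z i = false -> linoff i v z = linval v z.
Proof.
move=> zi; apply: eq_bigr => j _; case: eqP => [->|//]; by rewrite zi !mulr0.
Qed.

Lemma LO1 i v (z : 'I_n -> bool) : z i = true -> linval v z = v i + linoff i v z.
Proof.
move=> zi; rewrite /linval /linoff (bigD1 i) //= [X in _ = _ + X](bigD1 i) //=.
rewrite eqxx zi mul0r add0r mulr1; congr (_ + _).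
by apply: eq_bigr => j /negbTE ->.
Qed.

Lemma linval_ffun (v : 'I_n -> R) (x : 'I_n -> bool) :
  linval v [ffun j => x j] = linval v x.
Proof. by apply: eq_bigr => j _; rewrite ffunE. Qed.

Lemma DL (v : 'I_n -> R) (x : 'I_n -> bool) (e : R) :
  (forall j, 0 <= p j) -> 0 <= t ->
  pareto_optimal p v x -> t < linval v x <= t + e ->
  exists i, t < v i + Cmin i v <= t + e.
Proof.
move=> p0 t0 po /andP[xt xe].
set X : BV := [ffun j => x j].
have lpX : linval p X = linval p x by exact: linval_ffun.
have lvX : linval v X = linval v x by exact: linval_ffun.
set z0 : BV := [ffun _ => false].
have Qz0 : linval v z0 <= t.
  by rewrite /linval big1 // => j _; rewrite ffunE mulr0.
have pge0 (z : 'I_n -> bool) : 0 <= linval p z.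
  by apply: sumr_ge0 => j _; rewrite mulr_ge0.
case: (@arg_maxP _ _ BV z0 (fun z : BV => linval v z <= t) (fun z : BV => linval p z) Qz0) => y Qy ymax.
have pxy : linval p y < linval p x.
  rewrite ltNge; apply/negP => pxy; apply: (po y); split => //; split; lra.
have [i /andP[xi nyi]] : exists i, x i && ~~ y i.
  case: (pickP (fun i => x i && ~~ y i)) => [i H|H]; first by exists i.
  exfalso; move: pxy; rewrite ltNge => /negP; apply.
  apply: ler_sum => j _; have := H j; case: (x j); case: (y j) => //= _.
  by rewrite mulr0 mulr1.
have yi : y i = false by apply/negbTE.
have Pst_eq : Pst i v = linval p y.
  apply/le_anti/andP; split.
  - rewrite /Pst; elim/big_ind: _ => //.
    + by move=> a b Ha Hb; rewrite ge_max Ha Hb.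
    + move=> z /eqP zi; case: ifP => // Qz; apply: ymax; by rewrite -(LO0 v zi).
  - rewrite /Pst (bigD1 y) ?yi //= le_max; apply/orP; left.
    by rewrite (LO0 v yi) Qy.
have XiT : X i = true by rewrite /X ffunE.
have XC : X i && (Pst i v < linval p X).
  by rewrite ffunE xi /= Pst_eq lpX.
exists i; apply/andP; split; last first.
  rewrite /Cmin (bigD1 X) //= XC.
  have H := LO1 v XiT.
  have : Order.min (linoff i v X) (\big[Order.min/BIG i v]_(j | j != X)
        (if j i && (Pst i v < linval p j) then linoff i v j else BIG i v)) <= linoff i v X.
    by rewrite ge_min lexx.
  rewrite lvX in H; lra.
have HX := LO1 v XiT.
rewrite lvX in HX.
have HB : t - v i < BIG i v.
  rewrite /BIG (bigD1 X) //=.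
  have : 0 <= \sum_(j | j != X) Order.max (linoff i v j) 0.
    by apply: sumr_ge0 => j _; rewrite le_max lexx orbT.
  have : linoff i v X <= Order.max (linoff i v X) 0 by rewrite le_max lexx.
  lra.
suff : t - v i < Cmin i v by lra.
rewrite /Cmin; elim/big_ind: _ => //.
- by move=> a b Ha Hb; rewrite lt_min Ha Hb.
- move=> z _; case: ifP => // /andP[zi Pz].
  rewrite ltNge; apply/negP => H.
  have : linval v z <= t by rewrite (LO1 v zi); lra.
  move/ymax; rewrite -Pst_eq /= => H2; lra.
Qed.
End Det.


Lemma mbig (R : realType) dd (D : measurableType dd) (I : Type) (r : seq I) (Q : pred I)
  (op : R -> R -> R)
  (hop : forall f g : D -> R, measurable_fun setT f -> measurable_fun setT g ->
         measurable_fun setT (fun x => op (f x) (g x)))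
  (x0 : D -> R) (F : I -> D -> R) :
  measurable_fun setT x0 -> (forall z, measurable_fun setT (F z)) ->
  measurable_fun setT (fun x => \big[op/x0 x]_(z <- r | Q z) F z x).
Proof.
move=> m0 mF; elim: r => [|z r IH].
  by rewrite (_ : (fun x => _) = x0) //; apply: funext => x; rewrite big_nil.
case Qz: (Q z).
  rewrite (_ : (fun x => _) = (fun x => op (F z x) (\big[op/x0 x]_(z <- r | Q z) F z x))).
    exact: hop.
  by apply: funext => x; rewrite big_cons Qz.
rewrite (_ : (fun x => _) = (fun x => \big[op/x0 x]_(z <- r | Q z) F z x)) //.
by apply: funext => x; rewrite big_cons Qz.
Qed.

Section S6.
Variables (R : realType) (d : measure_display) (T : measurableType d)
  (P : probability T R) (n : nat) (w : 'I_n -> {RV P >-> R}) (p : 'I_n -> R) (t : R).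

Local Notation Tp i := (g_sigma_algebraType (G0 w i)).

Lemma m_linoff (i : 'I_n) (z : 'I_n -> bool) :
  measurable_fun (setT : set (Tp i)) (fun x => linoff i (fun j => w j x) z).
Proof.
rewrite /linoff; apply: mbig => //.
  by move=> f g mf mg; apply: measurable_funD.
move=> j; case: (eqVneq j i) => [->|ji].
  by rewrite ?eqxx; exact: measurable_cst.
rewrite /= ?(negbTE ji); apply: measurable_funM; first exact: w_mTp.
exact: measurable_cst.
Qed.

Lemma m_Pst (i : 'I_n) :
  measurable_fun (setT : set (Tp i)) (fun x => Pst p t i (fun j => w j x)).
Proof.
rewrite /Pst; apply: mbig => //.
  by move=> f g mf mg; apply: measurable_maxr.
move=> z; apply: measurable_fun_ifT => //.
apply: measurable_fun_ler; [exact: m_linoff|exact: measurable_cst].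
Qed.

Lemma m_BIG (i : 'I_n) :
  measurable_fun (setT : set (Tp i)) (fun x => BIG i (fun j => w j x)).
Proof.
rewrite /BIG; apply: measurable_funD => //.
apply: mbig => //.
  by move=> f g mf mg; apply: measurable_funD.
move=> z.
apply: measurable_maxr; [exact: m_linoff|exact: measurable_cst].
Qed.

Lemma m_Cmin (i : 'I_n) :
  measurable_fun (setT : set (Tp i)) (fun x => Cmin p t i (fun j => w j x)).
Proof.
rewrite /Cmin; apply: mbig.
- by move=> f g mf mg; apply: measurable_minr.
- exact: m_BIG.
move=> z; apply: measurable_fun_ifT.
- apply: measurable_and; first exact: measurable_cst.
  apply: measurable_fun_ltr; [exact: m_Pst|exact: measurable_cst].
- exact: m_linoff.
- exact: m_BIG.
Qed.
End S6.


Section S7.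
Variables (R : realType) (d : measure_display) (T : measurableType d)
  (P : probability T R) (n : nat) (w : 'I_n -> {RV P >-> R}) (p : 'I_n -> R).
Notation BV := {ffun 'I_n -> bool}.

Lemma lv_meas (X : 'I_n -> bool) :
  measurable_fun (setT : set T) (fun x => linval (fun j => w j x) X).
Proof.
rewrite /linval; apply: mbig => //.
  by move=> f g mf mg; apply: measurable_funD.
move=> j; apply: measurable_funM => //; exact: measurable_cst.
Qed.

Lemma dom_ffun (v : 'I_n -> R) (y x : 'I_n -> bool) :
  dominates p v [ffun j => y j] x <-> dominates p v y x.
Proof. by rewrite /dominates !linval_ffun. Qed.

Lemma pareto_ffun (v : 'I_n -> R) (x : 'I_n -> bool) :
  pareto_optimal p v [ffun j => x j] <-> pareto_optimal p v x.
Proof. by rewrite /pareto_optimal /dominates !linval_ffun. Qed.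

Lemma mDom (Y X : 'I_n -> bool) :
  measurable [set x | dominates p (fun j => w j x) Y X].
Proof.
set f := fun x => ((linval p X <= linval p Y) && (linval (fun j => w j x) Y <= linval (fun j => w j x) X))
   && ((linval p X < linval p Y) || (linval (fun j => w j x) Y < linval (fun j => w j x) X)).
have mf : measurable_fun setT f.
  apply: measurable_and; apply: measurable_and || apply: measurable_or;
    (try exact: measurable_cst).
  - by apply: measurable_fun_ler; apply: lv_meas.
  - by apply: measurable_fun_ltr; apply: lv_meas.
have := mf measurableT [set true] I; rewrite setTI.
rewrite (_ : f @^-1` [set true] = [set x | dominates p (fun j => w j x) Y X]) //.
apply/seteqP; split => x; rewrite /f /dominates /=.
- by move=> /andP[/andP[-> ->]] /orP[H|H]; do 2 split => //; [left|right].
- by move=> [-> [-> [H|H]]]; rewrite ?H ?orbT.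
Qed.

Lemma mPar (X : 'I_n -> bool) :
  measurable [set x | pareto_optimal p (fun j => w j x) X].
Proof.
rewrite (_ : [set x | _] = \bigcap_(Y in [set: BV]) ~` [set x | dominates p (fun j => w j x) Y X]).
  apply: fin_bigcap_measurable; first exact: finite_finset.
  by move=> Y _; apply: measurableC; exact: mDom.
apply/seteqP; split => x /=.
- by move=> H Y _; exact: H.
- move=> H y; rewrite -dom_ffun; exact: (H _ I).
Qed.
End S7.


Unset Implicit Arguments. Set Strict Implicit.

Theorem lemma2p4 (R : realType) (d : measure_display) (T : measurableType d)
  (P : probability T R) (n : nat) (phi : R) (p : 'I_n -> R)
  (a : 'I_n -> R) (w : 'I_n -> {RV P >-> R}) (t eps : R) :
  1 <= phi ->
  (forall i, 0 <= p i) ->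
  (forall i, 0 <= a i /\ a i + phi^-1 <= 1) ->
  (forall i, uniform_on (w i) (a i) (a i + phi^-1)) ->
  mutually_independent w ->
  0 <= t -> 0 < eps ->
  (P [set omega | exists x : 'I_n -> bool,
        pareto_optimal p (fun i => w i omega) x /\
        (t < linval (fun i => w i omega) x <= t + eps)%R]
   <= (n%:R * phi * eps)%:E)%E.
Proof.
move=> phi1 p0 ha hu hind t0 eps0.
set E := [set omega | _].
have phi0 : 0 < phi by lra.
have iphi0 : 0 < phi^-1 by rewrite invr_gt0.
have mE : measurable E.
  rewrite (_ : E = \bigcup_(X in [set: {ffun 'I_n -> bool}])
     ([set x | pareto_optimal p (fun j => w j x) X] `&`
      [set x | (t < linval (fun j => w j x) X <= t + eps)%R])).
    apply: fin_bigcup_measurable; first exact: finite_finset.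
    move=> X _; apply: measurableI; first exact: mPar.
    rewrite (_ : [set x | _] = setT `&` (fun x => linval (fun j => w j x) X) @^-1` `]t, (t + eps)%R]).
      exact: lv_meas.
    by apply/seteqP; split => x /=; rewrite in_itv /=; [move=> ->|case].
  apply/seteqP; split => x /=.
  - move=> [y [po hy]]; exists [ffun j => y j] => //; split.
      exact/pareto_ffun.
    by move: hy; rewrite -(linval_ffun (fun j => w j x) y).
  - by move=> [X _ [po hX]]; exists X.
have key : forall del, 0 < del -> (P E <= (n%:R * phi * (eps + del))%:E)%E.
  move=> del del0.
  pose Fs (k : 'I_n) := [set x | (t < w k x + Cmin p t k (fun j => w j x) <= t + eps)%R].
  pose F' (k : nat) := oapp Fs set0 (insub k).
  have F'E (k : 'I_n) : F' k = Fs k by rewrite /F' valK.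
  have mFs k : measurable (Fs k).
    rewrite (_ : Fs k = setT `&` (fun x => w k x + Cmin p t k (fun j => w j x)) @^-1` `]t, (t + eps)%R]).
      apply: measurable_funD => //; apply: (Tp_T (i:=k)); exact: m_Cmin.
    by apply/seteqP; split => x /=; rewrite in_itv /=; [move=> ->|case].
  have sub : E `<=` \big[setU/set0]_(k < n) F' k.
    move=> x [y [po hy]].
    have [i hi] := DL p0 t0 po hy.
    rewrite -bigcup_mkord; exists i; first exact: ltn_ord.
    by rewrite F'E; exact: hi.
  have mF' : forall k, `I_n k -> measurable (F' k).
    by move=> k kn; rewrite -[k]/(nat_of_ord (Ordinal kn)) F'E.
  have H : (P E <= \sum_(k < n) P (F' k))%E by exact: content_subadditive.
  apply: le_trans H _.
  rewrite (eq_bigr (fun k : 'I_n => P (Fs k))); last by move=> k _; rewrite F'E.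
  have CLb (k : 'I_n) : (P (Fs k) <= (phi * (eps + del))%:E)%E.
    have ab : a k < a k + phi^-1 by lra.
    have := CL hind ab (hu k) (m_Cmin (w:=w) p t (i:=k)) t eps0 del0.
    by rewrite addrAC subrr add0r invrK.
  have S1 : (\sum_(k < n) P (Fs k) <= \sum_(k < n) (phi * (eps + del))%:E)%E.
    by apply: lee_sum => k _; exact: CLb.
  apply: le_trans S1 _.
  by rewrite sumEFin sumr_const card_ord -mulrA mulr_natl.
apply/lee_addgt0Pr => r r0.
set c := n%:R * phi.
have c0 : 0 <= c by rewrite /c mulr_ge0 // ltW.
have c1 : 0 < c + 1 by lra.
apply: le_trans (key (r / (c + 1)) _) _; first by rewrite divr_gt0.
rewrite -EFinD lee_fin mulrDr lerD2l -/c mulrA ler_pdivrMr //; nra.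
Qed.
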